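(* Consider two predator species $i=1,2$, each feeding on the same prey population according to the model described in the context, with quantities for predator $i$ carrying subscript $i$ ($\psi_i$, $\tilde A_{i,t}$, $\tilde X_{i,t}$, $Y_{i,t}$). Suppose Assumptions (A) and (B) hold (for each predator), that $\mathbb{E}(X_t)\propto t$ for all $t\ge0$, and that for all $t\ge0$, $\tilde A_{1,t}\le_{lr}\tilde A_{2,t}$ and \[ \mathbb{E}(\tilde{A}_{1,t})\, \psi_{1}(t) = \mathbb{E}(\tilde{A}_{2,t})\, \psi_{2}(t). \] Then $\psi_1(t)\ge\psi_2(t)$ and \[ \frac{\mathrm{var}(Y_{1,t})}{\mathbb{E}(Y_{1,t})} \leq \frac{\mathrm{var}(Y_{2,t})}{\mathbb{E}(Y_{2,t})} \] for all $t\ge0$.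
   Context: Model. The parasite burden of a prey aged $t\ge 0$ is $X_t$, where $(X_t)_{t\ge0}$ is a non-decreasing integer-valued stochastic process with $X_0=0$ (moments assumed finite, denominators positive). Prey ages have probability density $f_A$ on $[0,\infty)$. Predator $i$ encounters random prey at the times of a non-homogeneous Poisson process with intensity $\phi_i$; a predator $i$ aged $t$ consumes an encountered prey aged $u$ with probability $p_i(u,t)$. The consumption times form a Poisson process with intensity $\psi_i(t)=\phi_i(t)\int_0^\infty p_i(u,t)f_A(u)\,du$. The age $\tilde A_{i,t}$ of a prey consumed by predator $i$ aged $t$ has density $p_i(a,t)f_A(a)/\int_0^\infty p_i(u,t)f_A(u)\,du$, and $\tilde X_{i,t}=X_{\tilde A_{i,t}}$ (with $\tilde A_{i,t}$ independent of $X$). Consumed prey transfer all parasites, contributions being independent; the burden $Y_{i,t}$ of predator $i$ at age $t$ ($Y_{i,0}=0$) is the sum over consumption times $s\le t$ of independent copies of $\tilde X_{i,s}$, so $\mathbb{E}(Y_{i,t})=\int_0^t\mathbb{E}(\tilde X_{i,s})\psi_i(s)ds$, $\mathrm{var}(Y_{i,t})=\int_0^t\mathbb{E}(\tilde X_{i,s}^2)\psi_i(s)ds$. Likelihood ratio order: for random variables $U,V$ (both discrete or both continuous) with mass/density functions $p_U,p_V$, $U\le_{lr}V$ means $p_V(w)/p_U(w)$ is non-decreasing in $w$ over the union of the supports. Assumption (A): for all $0\le s\le t$, $X_s\le_{lr}X_t$. Assumption (B) (for predator $i$): for all $0\le s<t$, $p_i(u,t)/p_i(u,s)$ is non-decreasing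 in $u$. *)

(* Defs.v *)
From HB Require Import structures.
From mathcomp Require Import all_boot all_order all_algebra.
From mathcomp Require Import all_classical all_reals all_analysis.
Set Implicit Arguments. Unset Strict Implicit. Unset Printing Implicit Defensive.
Import Order.TTheory GRing.Theory Num.Theory.
Local Open Scope classical_set_scope.
Local Open Scope ring_scope.

Section Defs.
Variable R : realType.
Local Notation leb := (@lebesgue_measure R).

(** ratio b/a with the convention b/0 = +oo (only used on the union of the
    supports, so 0/0 never matters). *)
Definition lr_ratio (a b : R) : \bar R :=
  if a == 0 then +oo%E else (b / a)%:E.

(** Likelihood ratio order U <=_lr V for mass/density functions pU, pV
    on the domain D: pV/pU non-decreasing over the union of the supports. *)
Definition lr_le {d} {T : porderType d} (D : set T) (pU pV : T -> R) : Prop :=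
  forall w1 w2, D w1 -> D w2 -> (w1 <= w2)%O ->
    (pU w1 != 0 \/ pV w1 != 0) -> (pU w2 != 0 \/ pV w2 != 0) ->
    (lr_ratio (pU w1) (pV w1) <= lr_ratio (pU w2) (pV w2))%E.

Section Process.
Context {d : measure_display} {Omega : measurableType d} (P : probability Omega R).
Variable X : R -> Omega -> nat.

Definition pmfX (t : R) (k : nat) : R := fine (P [set w | X t w = k]).

Definition momX (k : nat) (t : R) : R :=
  fine (\int[P]_w ((X t w)%:R ^+ k)%:E).
End Process.

Section Predator.
Variables (fA : R -> R) (phi : R -> R) (p : R -> R -> R).

Definition Zc (t : R) : R :=
  fine (\int[leb]_(u in `[0, +oo[) (p u t * fA u)%:E).

Definition psi (t : R) : R := phi t * Zc t.

(** density of the age A~_t of a prey consumed at predator age t *)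
Definition gA (t : R) (a : R) : R := p a t * fA a / Zc t.

Definition EA (t : R) : R :=
  fine (\int[leb]_(a in `[0, +oo[) (a * gA t a)%:E).

(** E(X~_t ^ k), where X~_t = X_{A~_t} with A~_t independent of X
    (iterated integral over the product of P and the law of A~_t). *)
Definition EXt (mX : nat -> R -> R) (k : nat) (t : R) : R :=
  fine (\int[leb]_(a in `[0, +oo[) (mX k a * gA t a)%:E).

(** E(Y_t) and var(Y_t) of the compound Poisson burden *)
Definition EY (mX : nat -> R -> R) (t : R) : R :=
  fine (\int[leb]_(s in `[0, t]) (EXt mX 1 s * psi s)%:E).
Definition varY (mX : nat -> R -> R) (t : R) : R :=
  fine (\int[leb]_(s in `[0, t]) (EXt mX 2 s * psi s)%:E).
End Predator.
End Defs.

Section Regularity.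
Variable R : realType.
Local Notation leb := (@lebesgue_measure R).
Local Open Scope classical_set_scope.
Local Open Scope ring_scope.

(** Standing regularity assumptions for one predator (well-defined model,
    finite moments, positive normalising denominators). [mX] is the moment
    function k t |-> E(X_t^k). *)
Definition predator_regular (fA phi : R -> R) (p : R -> R -> R)
    (mX : nat -> R -> R) : Prop :=
  (forall t : R, 0 <= t -> 0 <= phi t) /\
      (forall u t : R, 0 <= u -> 0 <= t -> 0 <= p u t <= 1) /\
      (forall t : R, 0 <= t -> measurable_fun (`[0, +oo[ : set R) (fun u => p u t)) /\
      (forall t : R, 0 <= t -> 0 < Zc fA p t) /\
      (forall t : R, 0 <= t ->
         leb.-integrable `[0, +oo[ (fun a => (a * gA fA p t a)%:E)) /\
      (forall (k : nat) (t : R), (0 < k <= 2)%N -> 0 <= t ->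
         leb.-integrable `[0, +oo[ (fun a => (mX k a * gA fA p t a)%:E)) /\
      (forall (k : nat) (t : R), (0 < k <= 2)%N -> 0 <= t ->
         leb.-integrable `[0, t] (fun s => (EXt fA p mX k s * psi fA phi p s)%:E)).
End Regularity.

(* Main.v *)
Require Import Defs.
From HB Require Import structures.
From mathcomp Require Import all_boot all_order all_algebra.
From mathcomp Require Import all_classical all_reals all_analysis.
From mathcomp Require Import measurable_realfun ring lra.
Import Order.TTheory GRing.Theory Num.Theory.
Local Open Scope classical_set_scope.
Local Open Scope ring_scope.

Section L0.
Context d (T : measurableType d) (R : realType) (mu : {measure set T -> \bar R}).
Variable D : set T.
Hypothesis mD : measurable D.
Local Notation int f := (mu.-integrable D (EFin \o f)).
Local Notation I f := (Rintegral mu D f).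

Lemma int_lin (f h : T -> R) (a : R) : int f -> int h ->
  int (fun y => a * f y + h y) /\ I (fun y => a * f y + h y) = a * I f + I h.
Proof.
move=> If Ih.
have Iaf : int (fun y => a * f y).
  have -> : EFin \o (fun y => a * f y) = (fun y => (a%:E * (EFin \o f) y)%E).
    by apply/funext => y /=; rewrite EFinM.
  exact: integrableZl.
split.
  have -> : EFin \o (fun y => a * f y + h y) =
     (((EFin \o (fun y => a * f y)) \+ (EFin \o h))).
    by apply/funext => y /=; rewrite EFinD.
  exact: integrableD.
by rewrite RintegralD // RintegralZl.
Qed.
Arguments int_lin {f h}.

Lemma int_cst0 : I (fun _ => 0) = 0.
Proof. by rewrite /Rintegral integral0. Qed.

Lemma int0 : int (fun _ => 0).
Proof.
apply/integrableP; split; first exact: measurable_cst.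
by under eq_integral do rewrite /= normr0; rewrite integral0.
Qed.

Lemma int_lin4 (f1 f2 f3 f4 : T -> R) a1 a2 a3 a4 :
  int f1 -> int f2 -> int f3 -> int f4 ->
  int (fun y => a1 * f1 y + (a2 * f2 y + (a3 * f3 y + (a4 * f4 y + 0)))) /\
  I (fun y => a1 * f1 y + (a2 * f2 y + (a3 * f3 y + (a4 * f4 y + 0)))) =
  a1 * I f1 + (a2 * I f2 + (a3 * I f3 + (a4 * I f4 + 0))).
Proof.
move=> i1 i2 i3 i4.
have [j4 e4] := int_lin a4 i4 int0.
have [j3 e3] := int_lin a3 i3 j4.
have [j2 e2] := int_lin a2 i2 j3.
have [j1 e1] := int_lin a1 i1 j2.
split => //.
by rewrite e1 e2 e3 e4 int_cst0.
Qed.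
Arguments int_lin4 {f1 f2 f3 f4}.

Lemma L0 (u v g1 g2 : T -> R) :
  int (fun x => u x * g1 x) -> int (fun x => u x * g2 x) ->
  int (fun x => v x * g1 x) -> int (fun x => v x * g2 x) ->
  (forall x y, D x -> D y ->
     0 <= (u x * v y - u y * v x) * (g1 x * g2 y - g1 y * g2 x)) ->
  I (fun x => u x * g2 x) * I (fun x => v x * g1 x) <=
  I (fun x => u x * g1 x) * I (fun x => v x * g2 x).
Proof.
move=> iu1 iu2 iv1 iv2 H.
pose Iu1 := I (fun x => u x * g1 x); pose Iu2 := I (fun x => u x * g2 x).
pose Iv1 := I (fun x => v x * g1 x); pose Iv2 := I (fun x => v x * g2 x).
rewrite -/Iu1 -/Iu2 -/Iv1 -/Iv2.
have inner : forall x, D x ->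
  0 <= Iv2 * (u x * g1 x) + (- Iv1 * (u x * g2 x) + (- Iu2 * (v x * g1 x)
      + (Iu1 * (v x * g2 x) + 0))).
  move=> x Dx.
  rewrite (_ : _ + _ = u x * g1 x * Iv2 + (- (u x * g2 x) * Iv1 +
     (- (v x * g1 x) * Iu2 + (v x * g2 x * Iu1 + 0)))); last by ring.
  have [_ <-] := int_lin4 (u x * g1 x) (- (u x * g2 x)) (- (v x * g1 x)) (v x * g2 x)
      iv2 iv1 iu2 iu1.
  apply: Rintegral_ge0 => y Dy.
  have := H x y Dx Dy; set e := (_ * _); move=> He.
  suff -> : u x * g1 x * (v y * g2 y) + (- (u x * g2 x) * (v y * g1 y) +
    (- (v x * g1 x) * (u y * g2 y) + (v x * g2 x * (u y * g1 y) + 0))) = e by [].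
  rewrite /e; ring.
have [_ E] := int_lin4 Iv2 (- Iv1) (- Iu2) Iu1 iu1 iu2 iv1 iv2.
have := Rintegral_ge0 mu inner; rewrite E -/Iu1 -/Iu2 -/Iv1 -/Iv2.
move=> h.
nra.
Qed.
End L0.
Lemma lr_cross (R : realType) dd (T : porderType dd) (D : set T) (pU pV : T -> R) :
  lr_le D pU pV -> (forall w, D w -> 0 <= pU w) -> (forall w, D w -> 0 <= pV w) ->
  forall x y, D x -> D y -> (x <= y)%O -> pU y * pV x <= pU x * pV y.
Proof.
move=> H U0 V0 x y Dx Dy xy.
have [Uy0|Uy0] := eqVneq (pU y) 0.
  by rewrite Uy0 mul0r mulr_ge0 ?U0 ?V0.
have [Vx0|Vx0] := eqVneq (pV x) 0.
  by rewrite Vx0 mulr0 mulr_ge0 ?U0 ?V0.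
have := H x y Dx Dy xy (or_intror Vx0) (or_introl Uy0).
rewrite /lr_ratio (negbTE Uy0).
have [Ux0|Ux0] := eqVneq (pU x) 0; first by rewrite leye_eq.
rewrite lee_fin => h.
have ux : 0 < pU x by rewrite lt_neqAle eq_sym Ux0 U0.
have uy : 0 < pU y by rewrite lt_neqAle eq_sym Uy0 U0.
rewrite ler_pdivrMr // mulrAC ler_pdivlMr // in h.
by rewrite mulrC [pU x * _]mulrC.
Qed.

Lemma sign_prod (R : realType) dd (T : orderType dd) (D : set T) (A B : T -> T -> R) :
  (forall x y, A x y = - A y x) -> (forall x y, B x y = - B y x) ->
  (forall x y, D x -> D y -> (x <= y)%O -> 0 <= A x y) ->
  (forall x y, D x -> D y -> (x <= y)%O -> 0 <= B x y) ->
  forall x y, D x -> D y -> 0 <= A x y * B x y.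
Proof.
move=> aA aB hA hB x y Dx Dy.
case: (leP x y) => xy; first by rewrite mulr_ge0 ?hA ?hB.
have yx := ltW xy.
rewrite aA aB mulrNN mulr_ge0 ?hA ?hB //.
Qed.
Section Disc.
Variable R : realType.
Context {d : measure_display} {Omega : measurableType d} (P : probability Omega R).
Variable X : R -> Omega -> nat.
Variable t : R.
Hypothesis mX : measurable_fun setT (fun w => ((X t w)%:R : R)).

Definition F (n : nat) := [set w | X t w = n].

Lemma mF n : measurable (F n).
Proof.
have mS : measurable [set (n%:R : R)] by [].
have := mX measurableT [set (n%:R : R)] mS.
congr measurable; apply/seteqP; split => w /=.
  by move=> [_ /eqP]; rewrite eqr_nat => /eqP.
by move=> ->.
Qed.

Lemma pmf_ge0 n : 0 <= pmfX P X t n.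
Proof. by rewrite /pmfX fine_ge0. Qed.

Lemma PF n : P (F n) = (pmfX P X t n)%:E.
Proof. by rewrite /pmfX fineK // fin_num_measure //; exact: mF. Qed.

Lemma rep k : (\int[P]_w (((X t w)%:R : R) ^+ k)%:E =
   \int[counting]_n ((n%:R : R) ^+ k * pmfX P X t n)%:E)%E.
Proof.
rewrite ge0_integral_count; last first.
  by move=> n; rewrite lee_fin mulr_ge0 ?exprn_ge0 ?pmf_ge0.
have -> : [set: Omega] = \bigcup_n F n.
  by apply/seteqP; split => w // _; exists (X t w).
rewrite ge0_integral_bigcup //.
- apply: eq_eseriesr => n _.
  rewrite (eq_integral (fun _ => ((n%:R : R) ^+ k)%:E)); last first.
    by move=> w /set_mem /= ->.
  rewrite integral_cst; last exact: mF.
  rewrite EFinM; congr (_ * _)%E; exact: PF.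
- exact: mF.
- apply/measurable_EFinP; apply: measurable_funX.
  exact: (measurable_funS measurableT).
- by move=> i j _ _ [w [Hi Hj]]; rewrite -Hi -Hj.
Qed.

End Disc.

Section Disc2.
Variable R : realType.
Context {d : measure_display} {Omega : measurableType d} (P : probability Omega R).
Variable X : R -> Omega -> nat.
Hypothesis mX : forall t, 0 <= t -> measurable_fun setT (fun w => ((X t w)%:R : R)).
Hypothesis iX : forall t, 0 <= t -> P.-integrable setT (fun w => (((X t w)%:R : R) ^+ 2)%:E).
Hypothesis HA : forall s t, 0 <= s -> s <= t -> lr_le setT (pmfX P X s) (pmfX P X t).

Lemma PXk_fin t k : 0 <= t -> (0 < k <= 2)%N ->
  (\int[P]_w (((X t w)%:R : R) ^+ k)%:E < +oo)%E.
Proof.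
move=> t0 k12.
have /integrableP [_ h] := iX _ t0.
apply: le_lt_trans h.
apply: ge0_le_integral => //.
- apply/measurable_EFinP; apply: measurable_funX.
  exact: mX _ t0.
- apply: measurableT_comp => //.
  apply/measurable_EFinP; apply: measurable_funX.
  exact: mX _ t0.
- move=> w _; rewrite gee0_abs ?lee_fin ?exprn_ge0 //.
  case/andP: k12; case: k => [//|[|[|//]]] _ _ //.
  rewrite expr1; have [->|n1] := eqVneq (X t w) 0%N; first by rewrite expr0n.
  by rewrite -natrX ler_nat leq_pmull // lt0n.
Qed.

Lemma cint t k : 0 <= t -> (0 < k <= 2)%N ->
  counting.-integrable setT (EFin \o (fun n : nat => (n%:R : R) ^+ k * pmfX P X t n)).
Proof.
move=> t0 k12; apply/integrableP; split; first by [].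
rewrite (eq_integral (fun n : nat => ((n%:R : R) ^+ k * pmfX P X t n)%:E)); last first.
  by move=> n _ /=; rewrite ger0_norm // mulr_ge0 ?exprn_ge0 ?pmf_ge0.
by rewrite -rep //; [exact: PXk_fin | exact: mX].
Qed.

Lemma momX_rep t k : 0 <= t ->
  momX P X k t = Rintegral counting setT (fun n : nat => (n%:R : R) ^+ k * pmfX P X t n).
Proof. by move=> t0; rewrite /momX rep //; exact: mX. Qed.

Lemma m12 x y : 0 <= x -> x <= y ->
  momX P X 1 y * momX P X 2 x <= momX P X 1 x * momX P X 2 y.
Proof.
move=> x0 xy; have y0 := le_trans x0 xy.
rewrite !momX_rep //.
apply: (@L0 _ _ _ counting setT measurableT (fun n : nat => (n%:R : R) ^+ 1) (fun n : nat => (n%:R : R) ^+ 2)) => //.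
- exact: cint.
- exact: cint.
- exact: cint.
- exact: cint.
apply: (@sign_prod R _ nat setT).
- by move=> a b; ring.
- by move=> a b; ring.
- move=> a b _ _ ab.
  rewrite (_ : _ - _ = (a%:R * b%:R) * (b%:R - a%:R)); last by ring.
  by rewrite mulr_ge0 ?subr_ge0 ?ler_nat // mulr_ge0.
- move=> a b _ _ ab; rewrite subr_ge0.
  apply: (@lr_cross R _ nat setT _ _ (HA _ _ x0 xy)) => //.
  + by move=> *; exact: pmf_ge0.
  + by move=> *; exact: pmf_ge0.
Qed.
End Disc2.

Section Pred.
Variable R : realType.
Local Notation leb := (@lebesgue_measure R).
Local Notation D := (`[0, +oo[%classic : set R).

Lemma Dge0 (x : R) : D x <-> 0 <= x.
Proof. by rewrite /= in_itv /= andbT. Qed.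

Lemma mD : measurable D.
Proof. exact: measurable_itv. Qed.

Lemma ge0_int (f : R -> R) : measurable_fun D f -> (forall x, D x -> 0 <= f x) ->
  (\int[leb]_(x in D) (f x)%:E < +oo)%E -> leb.-integrable D (EFin \o f).
Proof.
move=> mf f0 fin; apply/integrableP; split; first exact/measurable_EFinP.
apply: le_lt_trans fin; rewrite le_eqVlt; apply/orP; left; apply/eqP.
apply: eq_integral => x /set_mem Dx /=.
by rewrite ger0_norm // f0.
Qed.

Variables (fA phi : R -> R) (p : R -> R -> R).
Hypothesis mfA : measurable_fun D fA.
Hypothesis fA0 : forall a, 0 <= a -> 0 <= fA a.
Variable t : R.
Hypothesis t0 : 0 <= t.
Hypothesis p01 : forall u t : R, 0 <= u -> 0 <= t -> 0 <= p u t <= 1.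
Hypothesis mp : measurable_fun D (fun u => p u t).
Hypothesis Zc0 : 0 < Zc fA p t.

Lemma gA_ge0 a : D a -> 0 <= gA fA p t a.
Proof.
move=> /Dge0 a0; rewrite /gA divr_ge0 ?(ltW Zc0) // mulr_ge0 ?fA0 //.
by case/andP: (p01 _ _ a0 t0).
Qed.

Lemma int_pfA : leb.-integrable D (EFin \o (fun u => p u t * fA u)).
Proof.
apply: ge0_int.
- exact: measurable_funM.
- move=> x /Dge0 x0; rewrite mulr_ge0 ?fA0 //; by case/andP: (p01 _ _ x0 t0).
- move: Zc0; rewrite /Zc.
  have : (0 <= \int[leb]_(u in D) (p u t * fA u)%:E)%E.
    apply: integral_ge0 => x /Dge0 x0; rewrite lee_fin mulr_ge0 ?fA0 //.
    by case/andP: (p01 _ _ x0 t0).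
  case: (\int[leb]_(u in D) (p u t * fA u)%:E)%E => [r _ _|_|//].
    exact: ltry.
  by rewrite ltxx.
Qed.

Lemma int_gA : leb.-integrable D (EFin \o gA fA p t).
Proof.
have -> : EFin \o gA fA p t = (fun x => (EFin \o (fun u => (p u t * fA u)%R)) x * ((Zc fA p t)^-1)%:E)%E.
  by apply/funext => x /=; rewrite /gA EFinM.
exact: (integrableZr _ _ int_pfA).
Qed.

Lemma Rint_gA : Rintegral leb D (gA fA p t) = 1.
Proof.
rewrite /gA RintegralZr //; last exact: int_pfA.
by rewrite -/(Zc fA p t) mulfV // gt_eqF.
Qed.

Hypothesis intA : leb.-integrable D (fun a => (a * gA fA p t a)%:E).

Lemma EA_ge0 : 0 <= EA fA p t.
Proof.
apply: (Rintegral_ge0 leb (f := fun a => a * gA fA p t a)) => x Dx.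
by rewrite mulr_ge0 ?gA_ge0 //; apply/Dge0.
Qed.

Lemma EA_gt0 : 0 < EA fA p t.
Proof.
rewrite lt_neqAle EA_ge0 andbT; apply/eqP => E0.
have I0 : (\int[leb]_(x in D) (x * gA fA p t x)%:E = 0)%E.
  have := @integrable_fin_num _ _ _ leb D mD _ intA; move/fineK => <-.
  by rewrite -/(EA fA p t) -E0.
have Iabs : (\int[leb]_(x in D) `|(x * gA fA p t x)%:E| = 0)%E.
  rewrite -I0; apply: eq_integral => x /set_mem /[dup] Dx /Dge0 x0.
  by rewrite gee0_abs // lee_fin mulr_ge0 ?gA_ge0.
have mi : measurable_fun D (fun x => (x * gA fA p t x)%:E).
  exact: (measurable_int leb intA).
have := (ae_eq_integral_abs leb mD mi).1 Iabs => ae1.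
have ae0 : almost_everywhere leb (fun x : R => x != 0).
  exists [set 0]; split => //; first exact: lebesgue_measure_set1.
  by move=> x /= /negP; rewrite negbK => /eqP.
have ae2 : ae_eq leb D (EFin \o gA fA p t) (cst 0%E).
  apply: filterS2 ae1 ae0 => x h1 h2 Dx /=.
  move: (h1 Dx) => /= /eqP; rewrite eqe mulf_eq0 (negbTE h2) /= => /eqP ->.
  done.
have := @ae_eq_integral _ _ _ leb D (cst 0%E) _ mD (measurable_int leb int_gA)
   (measurable_cst _) ae2.
rewrite integral0 => h.
have := Rint_gA; rewrite /Rintegral h /= => /eqP; by rewrite eq_sym oner_eq0.
Qed.

End Pred.


Section Point.
Variable R : realType.
Local Notation leb := (@lebesgue_measure R).
Local Notation D := (`[0, +oo[%classic : set R).
Context {d : measure_display} {Omega : measurableType d} (P : probability Omega R).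
Variable X : R -> Omega -> nat.
Hypothesis mX : forall t, 0 <= t -> measurable_fun setT (fun w => ((X t w)%:R : R)).
Hypothesis iX : forall t, 0 <= t -> P.-integrable setT (fun w => (((X t w)%:R : R) ^+ 2)%:E).
Hypothesis HA : forall s t, 0 <= s -> s <= t -> lr_le setT (pmfX P X s) (pmfX P X t).
Variable c : R.
Hypothesis c0 : 0 < c.
Hypothesis Hc : forall t, 0 <= t -> momX P X 1 t = c * t.
Variables (fA phi1 phi2 : R -> R) (p1 p2 : R -> R -> R).
Hypothesis mfA : measurable_fun D fA.
Hypothesis fA0 : forall a, 0 <= a -> 0 <= fA a.
Variable s : R.
Hypothesis s0 : 0 <= s.
Hypothesis p101 : forall u t : R, 0 <= u -> 0 <= t -> 0 <= p1 u t <= 1.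
Hypothesis p201 : forall u t : R, 0 <= u -> 0 <= t -> 0 <= p2 u t <= 1.
Hypothesis mp1 : measurable_fun D (fun u => p1 u s).
Hypothesis mp2 : measurable_fun D (fun u => p2 u s).
Hypothesis Zc10 : 0 < Zc fA p1 s.
Hypothesis Zc20 : 0 < Zc fA p2 s.
Hypothesis intA1 : leb.-integrable D (fun a => (a * gA fA p1 s a)%:E).
Hypothesis intA2 : leb.-integrable D (fun a => (a * gA fA p2 s a)%:E).
Hypothesis intX1 : leb.-integrable D (fun a => (momX P X 2 a * gA fA p1 s a)%:E).
Hypothesis intX2 : leb.-integrable D (fun a => (momX P X 2 a * gA fA p2 s a)%:E).
Hypothesis phi10 : 0 <= phi1 s.
Hypothesis phi20 : 0 <= phi2 s.
Hypothesis Hlr : lr_le D (gA fA p1 s) (gA fA p2 s).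
Hypothesis Heq : EA fA p1 s * psi fA phi1 p1 s = EA fA p2 s * psi fA phi2 p2 s.

Let g1 := gA fA p1 s.
Let g2 := gA fA p2 s.

Let g1_ge0 x : D x -> 0 <= g1 x.
Proof. exact: (gA_ge0 _ _ _ fA0 _ s0 p101 Zc10 x). Qed.
Let g2_ge0 x : D x -> 0 <= g2 x.
Proof. exact: (gA_ge0 _ _ _ fA0 _ s0 p201 Zc20 x). Qed.

Let cross : forall x y, D x -> D y -> (x <= y)%O -> g1 y * g2 x <= g1 x * g2 y.
Proof. exact: (@lr_cross R _ R D _ _ Hlr g1_ge0 g2_ge0). Qed.

Let int1 (g : R -> R) : leb.-integrable D (EFin \o g) ->
  leb.-integrable D (EFin \o (fun x => 1 * g x)).
Proof. by move=> h; have -> : (fun x => 1 * g x) = g by apply/funext => x; rewrite mul1r. Qed.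

Lemma EA12 : EA fA p1 s <= EA fA p2 s.
Proof.
have ig1 : leb.-integrable D (EFin \o g1) by exact: (int_gA _ _ _ mfA fA0 _ s0 p101 mp1 Zc10).
have ig2 : leb.-integrable D (EFin \o g2) by exact: (int_gA _ _ _ mfA fA0 _ s0 p201 mp2 Zc20).
have := (@L0 _ _ _ leb D (mD R) (fun _ => 1) (fun x => x) g1 g2 (int1 _ ig1) (int1 _ ig2) intA1 intA2).
have R1 : Rintegral leb D (fun x => 1 * g1 x) = 1.
  rewrite (@eq_Rintegral _ _ _ leb D g1); last by move=> x _; rewrite mul1r.
  exact: (Rint_gA _ _ _ mfA fA0 _ s0 p101 mp1 Zc10).
have R2 : Rintegral leb D (fun x => 1 * g2 x) = 1.
  rewrite (@eq_Rintegral _ _ _ leb D g2); last by move=> x _; rewrite mul1r.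
  exact: (Rint_gA _ _ _ mfA fA0 _ s0 p201 mp2 Zc20).
rewrite R1 R2 !mul1r; apply.
apply: (@sign_prod R _ R D).
- by move=> a b; ring.
- by move=> a b; ring.
- by move=> a b _ _ ab; rewrite !mul1r subr_ge0.
- by move=> a b Da Db ab; rewrite subr_ge0; exact: cross.
Qed.

Lemma psi12 : psi fA phi2 p2 s <= psi fA phi1 p1 s.
Proof.
have e1 := EA_gt0 _ _ _ mfA fA0 _ s0 p101 mp1 Zc10 intA1.
have e12 := EA12.
have ps2 : 0 <= psi fA phi2 p2 s by rewrite /psi mulr_ge0 // ltW.
move: Heq e1 e12 ps2.
set a1 := EA _ _ _; set a2 := EA _ _ _; set q1 := psi _ _ _ _; set q2 := psi _ _ _ _.
move=> E h1 h2 h3; nra.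
Qed.

Lemma x_m2 x y : D x -> D y -> (x <= y)%O ->
  0 <= x * momX P X 2 y - y * momX P X 2 x.
Proof.
move=> /Dge0 x0 /Dge0 y0 xy.
have := @m12 R _ _ P X mX iX HA x y x0 xy.
rewrite !Hc // => h.
rewrite subr_ge0.
have : c * (y * momX P X 2 x) <= c * (x * momX P X 2 y).
  by rewrite !mulrA.
by rewrite ler_pM2l.
Qed.

Lemma Vineq : EXt fA p1 (momX P X) 2 s * psi fA phi1 p1 s <=
            EXt fA p2 (momX P X) 2 s * psi fA phi2 p2 s.
Proof.
have L := (@L0 _ _ _ leb D (mD R) (fun x => x) (momX P X 2) g1 g2 intA1 intA2 intX1 intX2).
have : EA fA p2 s * EXt fA p1 (momX P X) 2 s <= EA fA p1 s * EXt fA p2 (momX P X) 2 s.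
  apply: L.
  apply: (@sign_prod R _ R D).
  - by move=> a b; ring.
  - by move=> a b; ring.
  - exact: x_m2.
  - by move=> a b Da Db ab; rewrite subr_ge0; exact: cross.
have e1 := EA_gt0 _ _ _ mfA fA0 _ s0 p101 mp1 Zc10 intA1.
have e2 := EA_gt0 _ _ _ mfA fA0 _ s0 p201 mp2 Zc20 intA2.
have ps1 : 0 <= psi fA phi1 p1 s by rewrite /psi mulr_ge0 // ltW.
have ps2 : 0 <= psi fA phi2 p2 s by rewrite /psi mulr_ge0 // ltW.
have V1 : 0 <= EXt fA p1 (momX P X) 2 s.
  apply: (Rintegral_ge0 leb (f := fun a => momX P X 2 a * g1 a)) => x Dx.
  rewrite mulr_ge0 ?g1_ge0 // /momX fine_ge0 // integral_ge0 // => w _.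
have V2 : 0 <= EXt fA p2 (momX P X) 2 s.
  apply: (Rintegral_ge0 leb (f := fun a => momX P X 2 a * g2 a)) => x Dx.
  rewrite mulr_ge0 ?g2_ge0 // /momX fine_ge0 // integral_ge0 // => w _.
move: Heq e1 e2 ps1 ps2 V1 V2.
set a1 := EA _ p1 _; set a2 := EA _ p2 _; set q1 := psi _ _ p1 _; set q2 := psi _ _ p2 _.
set v1 := EXt _ p1 _ _ _; set v2 := EXt _ p2 _ _ _.
move=> E h1 h2 h3 h4 h5 h6 h.
have [q10|q1pos] := eqVneq q1 0.
  by rewrite q10 mulr0 mulr_ge0.
have q1p : 0 < q1 by rewrite lt_neqAle eq_sym q1pos h3.
have K : 0 < a1 * q1 by rewrite mulr_gt0.
have hh : a2 * v1 * (q1 * q2) <= a1 * v2 * (q1 * q2) by rewrite ler_wpM2r // mulr_ge0.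
have L1 : a2 * v1 * (q1 * q2) = (a1 * q1) * (v1 * q1) by rewrite E; ring.
have L2 : a1 * v2 * (q1 * q2) = (a1 * q1) * (v2 * q2) by ring.
by rewrite -(ler_pM2l K) -L1 -L2.
Qed.

End Point.

Lemma EXt1_eq (R : realType) (fA : R -> R) p (mX : nat -> R -> R) c s :
  (forall a, 0 <= a -> mX 1%N a = c * a) ->
  (@lebesgue_measure R).-integrable (`[0, +oo[%classic : set R) (fun a => (a * gA fA p s a)%:E) ->
  EXt fA p mX 1 s = c * EA fA p s.
Proof.
move=> Hc iA.
change (Rintegral (@lebesgue_measure R) (`[0, +oo[%classic : set R)
   (fun a => mX 1%N a * gA fA p s a) =
   c * Rintegral (@lebesgue_measure R) (`[0, +oo[%classic : set R) (fun a => a * gA fA p s a)).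
rewrite -(@RintegralZl _ _ _ (@lebesgue_measure R) _ (fun a => a * gA fA p s a) c (mD R) iA).
apply: eq_Rintegral => a /set_mem /Dge0 a0.
by rewrite Hc // mulrA.
Qed.

Theorem theorem3 (R : realType) (d : measure_display) (Omega : measurableType d)
  (P : probability Omega R) (X : R -> Omega -> nat)
  (fA phi1 phi2 : R -> R) (p1 p2 : R -> R -> R) :
  (forall t, 0 <= t -> measurable_fun setT (fun w => ((X t w)%:R : R))) ->
  (forall w, X 0 w = 0%N) ->
  (forall s t w, 0 <= s -> s <= t -> (X s w <= X t w)%N) ->
  (forall t, 0 <= t -> P.-integrable setT (fun w => (((X t w)%:R : R) ^+ 2)%:E)) ->
  measurable_fun (`[0, +oo[ : set R) fA ->
  (forall a, 0 <= a -> 0 <= fA a) ->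
  (\int[@lebesgue_measure R]_(a in (`[0%R, +oo[ : set R)) (fA a)%:E = 1)%E ->
  predator_regular fA phi1 p1 (momX P X) ->
  predator_regular fA phi2 p2 (momX P X) ->
  (forall t, 0 < t -> 0 < EY fA phi1 p1 (momX P X) t) ->
  (forall t, 0 < t -> 0 < EY fA phi2 p2 (momX P X) t) ->
  (forall s t, 0 <= s -> s <= t -> lr_le setT (pmfX P X s) (pmfX P X t)) ->
  (forall s t, 0 <= s -> s < t ->
     lr_le (`[0, +oo[ : set R) (fun u => p1 u s) (fun u => p1 u t)) ->
  (forall s t, 0 <= s -> s < t ->
     lr_le (`[0, +oo[ : set R) (fun u => p2 u s) (fun u => p2 u t)) ->
  (exists c : R, forall t, 0 <= t -> momX P X 1 t = c * t) ->
  (forall t, 0 <= t -> lr_le (`[0, +oo[ : set R) (gA fA p1 t) (gA fA p2 t)) ->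
  (forall t, 0 <= t ->
     EA fA p1 t * psi fA phi1 p1 t = EA fA p2 t * psi fA phi2 p2 t) ->
  forall t, 0 <= t ->
    psi fA phi2 p2 t <= psi fA phi1 p1 t /\
    varY fA phi1 p1 (momX P X) t / EY fA phi1 p1 (momX P X) t <=
    varY fA phi2 p2 (momX P X) t / EY fA phi2 p2 (momX P X) t.
Proof.
move=> mX _ _ iX mfA fA0 _ reg1 reg2 EY1p _ HA _ _ [c Hc] Hlr Heq t t0.
case: reg1 => phi10 [p101 [mp1 [Zc10 [intA1 [intX1 intY1]]]]].
case: reg2 => phi20 [p201 [mp2 [Zc20 [intA2 [intX2 intY2]]]]].
have itv0 : forall s r, (`[0, r]%classic : set R) s -> 0 <= s.
  by move=> s r; rewrite /= in_itv /= => /andP[].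
have E1 : forall s, 0 <= s -> EXt fA p1 (momX P X) 1 s = c * EA fA p1 s.
  by move=> s s0; exact: (@EXt1_eq R fA p1 (momX P X) c s Hc (intA1 s s0)).
have E2 : forall s, 0 <= s -> EXt fA p2 (momX P X) 1 s = c * EA fA p2 s.
  by move=> s s0; exact: (@EXt1_eq R fA p2 (momX P X) c s Hc (intA2 s s0)).
have c_ge0 : 0 <= c.
  have := Hc 1 ler01; rewrite mulr1 => <-.
  rewrite /momX fine_ge0 // integral_ge0 // => w _.
have c_gt0 : 0 < c.
  rewrite lt_neqAle c_ge0 andbT; apply/eqP => c0.
  have := EY1p 1 ltr01; rewrite /EY.
  rewrite (eq_integral (fun _ => 0%E)) ?integral0 ?ltxx //.
  move=> s /set_mem /itv0 s0.
  by rewrite E1 // -c0 !mul0r.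
have ps12 : forall s, 0 <= s -> psi fA phi2 p2 s <= psi fA phi1 p1 s.
  move=> s s0.
  exact: (@psi12 R fA phi1 phi2 p1 p2 mfA fA0 s s0 p101 p201 (mp1 s s0) (mp2 s s0) (Zc10 s s0) (Zc20 s s0)
    (intA1 s s0) (intA2 s s0) (phi20 s s0) (Hlr s s0) (Heq s s0)).
split; first exact: ps12.
have EYeq : EY fA phi1 p1 (momX P X) t = EY fA phi2 p2 (momX P X) t.
  rewrite /EY; congr fine; apply: eq_integral => s /set_mem /itv0 s0.
  rewrite E1 // E2 //.
  by rewrite -!mulrA Heq.
have EY_ge0 : 0 <= EY fA phi1 p1 (momX P X) t.
  rewrite /EY fine_ge0 // integral_ge0 // => s /itv0 s0.
  rewrite lee_fin E1 //.
  have e := EA_ge0 _ _ _ fA0 _ s0 p101 (Zc10 s s0).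
  have q : 0 <= psi fA phi1 p1 s by rewrite /psi mulr_ge0 // ?phi10 // ltW // Zc10.
  by apply: mulr_ge0 => //; apply: mulr_ge0.
rewrite -EYeq; apply: ler_wpM2r; first by rewrite invr_ge0.
apply: (@le_Rintegral _ _ _ (@lebesgue_measure R) (`[0, t]%classic : set R)
   (fun s => EXt fA p1 (momX P X) 2 s * psi fA phi1 p1 s)
   (fun s => EXt fA p2 (momX P X) 2 s * psi fA phi2 p2 s)).
- exact: measurable_itv.
- exact: (intY1 2%N t isT t0).
- exact: (intY2 2%N t isT t0).
move=> s /itv0 s0.
exact: (@Vineq R _ _ P X mX iX HA c c_gt0 Hc fA phi1 phi2 p1 p2 mfA fA0 s s0 p101 p201 (mp1 s s0) (mp2 s s0)
   (Zc10 s s0) (Zc20 s s0) (intA1 s s0) (intA2 s s0) (intX1 2%N s isT s0)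
   (intX2 2%N s isT s0) (phi10 s s0) (phi20 s s0) (Hlr s s0) (Heq s s0)).
Qed.
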